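(* Let $\mathcal{A}$ be an algorithm that takes a (static, non-temporal) graph $G'$ on $n'$ vertices as input and computes an $(\alpha,\beta)$-spanner of $G'$ of size $O(f(n'))$. Then, for any temporal graph $G$ on $n$ vertices with lifetime $L$, one can use $\mathcal{A}$ to build a temporal $(\alpha,L\beta)$-spanner $H$ of $G$ of size $O(L\cdot f(n))$.
   Context: For a static undirected graph $G'$, an $(\alpha,\beta)$-spanner is a subgraph $H'$ with $V(H')=V(G')$ and $d_{H'}(u,v)\le\alpha\, d_{G'}(u,v)+\beta$ for all $u,v$, where $d$ denotes shortest-path distance (number of edges). A temporal graph is an undirected graph $G=(V,E)$ with a labeling $\lambda:E\to\mathbb{N}^+$; its lifetime $L$ is the number of distinct labels used. A temporal path is a path whose traversed edges have non-decreasing labels in the order of traversal; its length is its number of edges, and $d_G(u,v)$ is the minimum length of a temporal path from $u$ to $v$ in $G$ ($+\infty$ if none). A temporal $(\alpha,\beta)$-spanner of $G$ is a subgraph $H$ with $V(H)=V$, $E(H)\subseteq E$ (same labels), such that $d_H(u,v)\le\alpha\, d_G(u,v)+\beta$ for all $u,v\in V$. Size means number of edges. *)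

(* Defs.v *)
From HB Require Import structures.
From mathcomp Require Import all_boot all_order all_algebra.
Set Implicit Arguments. Unset Strict Implicit. Unset Printing Implicit Defensive.
Import Order.TTheory GRing.Theory Num.Theory.

Definition is_graph (V : finType) (E : {set {set V}}) : Prop :=
  forall e, e \in E -> #|e| = 2.

Definition adj (V : finType) (E : {set {set V}}) : rel V :=
  fun x y => [set x; y] \in E.

(* s is a walk in E from u to v; its length (number of edges) is size s
   (the walk visits u :: s). *)
Definition walk (V : finType) (E : {set {set V}}) (u v : V) (s : seq V) : Prop :=
  path (adj E) u s /\ last u s = v.

(* Static (alpha,beta)-spanner: H subgraph of E and
   d_H(u,v) <= alpha d_E(u,v) + beta, unfolded over walks (d = +oo if none). *)
Definition spanner (R : realFieldType) (alpha beta : R) (V : finType)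
  (E H : {set {set V}}) : Prop :=
  H \subset E /\
  forall (u v : V) (s : seq V), walk E u v s ->
    exists s' : seq V, walk H u v s' /\
      ((size s')%:R <= alpha * (size s)%:R + beta)%R.

Definition wedges (V : finType) (u : V) (s : seq V) : seq {set V} :=
  pairmap (fun x y => [set x; y]) u s.

Definition twalk (V : finType) (E : {set {set V}}) (lam : {set V} -> nat)
  (u v : V) (s : seq V) : Prop :=
  all (fun e => e \in E) (wedges u s) /\
  sorted leq (map lam (wedges u s)) /\ last u s = v.

Definition lifetime (V : finType) (E : {set {set V}}) (lam : {set V} -> nat) : nat :=
  size (undup [seq lam e | e <- enum E]).

Definition tspanner (R : realFieldType) (alpha beta : R) (V : finType)
  (E : {set {set V}}) (lam : {set V} -> nat) (H : {set {set V}}) : Prop :=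
  H \subset E /\
  forall (u v : V) (s : seq V), twalk E lam u v s ->
    exists s' : seq V, twalk H lam u v s' /\
      ((size s')%:R <= alpha * (size s)%:R + beta)%R.

(* Main.v *)
Require Import Defs.
From HB Require Import structures.
From mathcomp Require Import all_boot all_order all_algebra.
From mathcomp Require Import lra zify.
Import Order.TTheory GRing.Theory Num.Theory.
Set Implicit Arguments. Unset Strict Implicit.

Lemma path_wedges (V : finType) (X : {set {set V}}) (w : V) (p : seq V) :
  path (adj X) w p -> all (fun e => e \in X) (wedges w p).
Proof. elim: p w => [|x p IH] w //= /andP[h1 h2]; apply/andP; split; [exact: h1 | exact: IH]. Qed.

Lemma path_const (V : finType) (lam : {set V} -> nat) k (l : seq {set V}) B :
  all (fun e => lam e == k) l -> path leq k B -> path leq k (map lam l ++ B).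
Proof.
elim: l => [|e l IH] //= /andP[/eqP -> h] hB; by rewrite leqnn IH.
Qed.

Lemma path_lower (k j : nat) B : path leq j B -> k <= j -> path leq k B.
Proof. case: B => [|b B] //= /andP[h1 h2] hk; by rewrite (leq_trans hk h1). Qed.

Definition Ek (V : finType) (E : {set {set V}}) (lam : {set V} -> nat) (k : nat) :=
  [set e in E | lam e == k].

Section Core.
Variables (R : realFieldType) (alpha beta : R) (V : finType) (E H : {set {set V}})
  (lam : {set V} -> nat) (ls : seq nat).
Hypotheses (hb : (0 <= beta)%R) (hls : forall e, e \in E -> lam e \in ls) (uls : uniq ls)
  (hsp : forall i, i \in ls -> exists Hi : {set {set V}}, Hi \subset H /\ spanner alpha beta (Ek E lam i) Hi).

Lemma seg_span k w u p : walk (Ek E lam k) w u p -> k \in ls ->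
  exists p', all (fun e => e \in H) (wedges w p') /\
    all (fun e => lam e == k) (wedges w p') /\ last w p' = u /\
    ((size p')%:R <= alpha * (size p)%:R + beta)%R.
Proof.
move=> hw kl; have [Hi [sHi [sHE hs]]] := hsp kl.
have [p' [[hp hl] hsz]] := hs _ _ _ hw.
exists p'; split; [|split; [|split]] => //.
- apply: sub_all (path_wedges hp) => e /(subsetP sHi) //.
- apply: sub_all (path_wedges hp) => e /(subsetP sHE); rewrite inE => /andP[].
  by [].
Qed.

Lemma cnt_step k j : k < j -> j \in ls ->
  (count (fun i => j < i) ls).+1 <= count (fun i => k < i) ls.
Proof.
move=> kj jl.
have h1 := count_predUI (fun i => j < i) (pred1 j) ls.
have h2 : count (predI (fun i => j < i) (pred1 j)) ls = 0.
  apply/eqP; rewrite -leqn0 -(count_pred0 ls); apply: sub_count => i /=.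
  by case/andP => a /eqP b; subst; rewrite ltnn in a.
have h3 : count (pred1 j) ls = 1 by rewrite count_uniq_mem // jl.
have h4 : count (predU (fun i => j < i) (pred1 j)) ls <= count (fun i => k < i) ls.
  apply: sub_count => i /= /orP[a|/eqP ->] //; exact: ltn_trans a.
rewrite h2 h3 addn0 in h1; rewrite h1 in h4; lia.
Qed.

Lemma core s : forall k w u p, walk (Ek E lam k) w u p -> k \in ls ->
  all (fun e => e \in E) (wedges u s) -> path leq k (map lam (wedges u s)) ->
  exists s', all (fun e => e \in H) (wedges w s') /\
    path leq k (map lam (wedges w s')) /\ last w s' = last u s /\
    ((size s')%:R <= alpha * (size p + size s)%:R
                     + (1 + count (fun i => (k < i)%N) ls)%:R * beta)%R.
Proof.
elim: s => [|x s IH] k w u p hw kl hE hP.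
- have [p' [h1 [h2 [h3 h4]]]] := seg_span hw kl.
  exists p'; split; [|split; [|split]] => //.
  + by rewrite -[map _ _]cats0; apply: path_const.
  + rewrite addn0 natrD mulrDl mul1r.
    have : (0 <= (count (fun i => (k < i)%N) ls)%:R * beta)%R by apply: mulr_ge0.
    lra.
- move: hE hP => /= /andP[ex hE] /andP[kj hP].
  have jl := hls ex.
  case: (ltngtP k (lam [set u; x])) => [kj'|jk|ekj].
  + clear kj; rename kj' into kj. have [p' [h1 [h2 [h3 h4]]]] := seg_span hw kl.
    have hw' : walk (Ek E lam (lam [set u; x])) u x [:: x].
      by split => //=; rewrite /adj /Ek inE ex eqxx.
    have [s'' [g1 [g2 [g3 g4]]]] := IH _ _ _ _ hw' jl hE hP.
    exists (p' ++ s''); split; [|split; [|split]].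
    * by rewrite /wedges pairmap_cat all_cat h1 h3.
    * rewrite /wedges pairmap_cat map_cat h3; apply: path_const => //.
      exact: path_lower g2 (ltnW kj).
    * by rewrite last_cat h3.
    * rewrite size_cat natrD.
      have c := cnt_step kj jl.
      have : ((1 + (1 + count (fun i => (lam [set u; x] < i)%N) ls))%:R * beta
             <= (1 + count (fun i => (k < i)%N) ls)%:R * beta)%R.
        by apply: ler_wpM2r => //; rewrite ler_nat; lia.
      move: g4; rewrite /= !natrD !mulrDl !mulrDr /= mul1r.
      lra.
  + by rewrite leqNgt jk in kj.
  + rewrite -ekj in hP.
    have hw' : walk (Ek E lam k) w x (rcons p x).
      case: hw => hw1 hw2; split; last by rewrite last_rcons.
      by rewrite rcons_path hw1 hw2 /adj /Ek inE ex /= ekj.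
    have [s'' [g1 [g2 [g3 g4]]]] := IH _ _ _ _ hw' kl hE hP.
    exists s''; split; [|split; [|split]] => //.
    by move: g4; rewrite size_rcons /= addSnnS.
Qed.

End Core.

Lemma build (R : realFieldType) (alpha beta : R) (V : finType) (E : {set {set V}})
  (lam : {set V} -> nat) (B : R) :
  (forall i, exists Hi : {set {set V}}, spanner alpha beta (Ek E lam i) Hi /\ (#|Hi|%:R <= B)%R) ->
  forall l : seq nat, exists H : {set {set V}}, H \subset E /\
    (#|H|%:R <= (size l)%:R * B)%R /\
    forall i, i \in l -> exists Hi : {set {set V}}, Hi \subset H /\ spanner alpha beta (Ek E lam i) Hi.
Proof.
move=> hB; elim=> [|i l [H [sHE [hc hs]]]].
- exists set0; split; first exact: sub0set.
  by rewrite cards0 /= mul0r; split => // i.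
- have [Hi [[sHi hsi] hci]] := hB i.
  exists (Hi :|: H); split; [|split].
  + rewrite subUset sHE andbT; apply: subset_trans sHi _.
    by apply/subsetP => e; rewrite inE => /andP[].
  + have c1 := leq_card_setU Hi H.
    have c2 : ((#|Hi :|: H|)%:R <= (#|Hi|)%:R + (#|H|)%:R :> R)%R.
      by rewrite -natrD ler_nat; case: c1.
    rewrite /= -addn1 natrD mulrDl mul1r. lra.
  + move=> j; rewrite inE => /orP[/eqP ->|jl].
    * exists Hi; split; [exact: subsetUl | by split].
    * have [Hj [sHj hj]] := hs j jl; exists Hj; split => //.
      exact: subset_trans sHj (subsetUr _ _).
Qed.

Theorem theorem22 (R : realFieldType) (alpha beta : R) (f : nat -> R) :
  (exists (C : R) (N0 : nat),
     forall (V : finType) (E : {set {set V}}),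
       is_graph E -> (N0 <= #|V|)%N ->
       exists H : {set {set V}},
         spanner alpha beta E H /\ (#|H|%:R <= C * f #|V|)%R) ->
  exists (C' : R) (N1 : nat),
    forall (V : finType) (E : {set {set V}}) (lam : {set V} -> nat),
      is_graph E -> (forall e, e \in E -> (0 < lam e)%N) -> (N1 <= #|V|)%N ->
      exists H : {set {set V}},
        tspanner alpha ((lifetime E lam)%:R * beta)%R E lam H /\
        (#|H|%:R <= C' * ((lifetime E lam)%:R * f #|V|))%R.
Proof.
move=> [C [N0 hA]].
have hb : (0 <= beta)%R.
  have g0 : is_graph (set0 : {set {set 'I_N0.+1}}) by move=> e; rewrite inE.
  have n0 : (N0 <= #|'I_N0.+1|)%N by rewrite card_ord.
  have [H [[_ hs] _]] := hA _ _ g0 n0.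
  have [s' [_ h]] := hs ord0 ord0 [::] (conj erefl erefl).
  move: h; rewrite mulr0 add0r; apply: le_trans; exact: ler0n.
exists C, N0 => V E lam hE _ hN.
set ls := undup [seq lam e | e <- enum E].
have hBi : forall i, exists Hi : {set {set V}}, spanner alpha beta (Ek E lam i) Hi /\ (#|Hi|%:R <= C * f #|V|)%R.
  move=> i; apply: hA hN => e; rewrite inE => /andP[eE _]; exact: hE.
have [H [sHE [hc hs]]] := build hBi ls.
have hls : forall e, e \in E -> lam e \in ls.
  by move=> e eE; rewrite mem_undup; apply: map_f; rewrite mem_enum.
have uls : uniq ls by exact: undup_uniq.
exists H; split; last first.
  by rewrite /lifetime -/ls mulrCA.
split => // u v [|x s] [hE1 [hS hl]].
- exists [::]; split; first by split.
  by rewrite /= mulr0 add0r; apply: mulr_ge0.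
- move: hS => /=; rewrite /wedges /= => hS.
  have ex : [set u; x] \in E by case/andP: hE1.
  have kl := hls _ ex.
  have hw : walk (Ek E lam (lam [set u; x])) u u [::] by [].
  have hP : path leq (lam [set u; x]) (map lam (wedges u (x :: s))).
    by rewrite /wedges /= leqnn.
  have [s' [g1 [g2 [g3 g4]]]] := core hb hls uls hs hw kl hE1 hP.
  exists s'; split.
    split => //; split; last by rewrite g3 hl.
    move: g2; rewrite /sorted; case: (map lam (wedges u s')) => //= a l /andP[] //.
  have c : (1 + count (fun i => (lam [set u; x] < i)%N) ls <= size ls)%N.
    rewrite -(count_predC (fun i => (lam [set u; x] < i)%N) ls) addnC leq_add2l.
    rewrite -has_count; apply/hasP; exists (lam [set u; x]) => //=.
    by rewrite ltnn.
  have : ((1 + count (fun i => (lam [set u; x] < i)%N) ls)%:R * beta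
          <= (lifetime E lam)%:R * beta)%R.
    by apply: ler_wpM2r => //; rewrite ler_nat.
  move: g4; rewrite add0n. have -> : size (x :: s) = (size s).+1 by []. lra.
Qed.
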